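(* Let $l\in\mathbb N-\frac12$. There is a unique homomorphism of associative algebras $\Phi_l:U(\tilde{\mathfrak g}^{(l)})\to U(\tilde{\mathcal H}^{(l)})_{(z)}$ which restricts to the identity on $U(\tilde{\mathcal H}^{(l)})$ and satisfies $$\Phi_l(e)=E:=\frac{1}{z}\sum_{k=1}^{2l}(-1)^{k+l+\frac12}\frac{l-k}{(k-1)!(2l-k)!}\,p_{k-1}p_{2l-k},$$ $$\Phi_l(f)=F:=\frac{1}{z}\sum_{k=1}^{2l}(-1)^{k+l-\frac12}\frac{l-k}{(k-1)!(2l-k)!}\,p_{k}p_{2l-k+1},$$ $$\Phi_l(h)=H:=\frac{2}{z}\sum_{k=0}^{l-\frac12}(-1)^{k+l-\frac12}\frac{l-k}{k!(2l-k)!}\,p_{2l-k}p_k-\frac{(l+\frac12)^2}{2}.$$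
   Context: For $l\in\mathbb N-\frac12=\{\frac12,\frac32,\dots\}$, $\tilde{\mathfrak g}^{(l)}$ is the complex Lie algebra with basis $e,h,f,p_0,\dots,p_{2l},z$ and brackets $[h,e]=2e$, $[h,f]=-2f$, $[e,f]=h$, $[h,p_k]=2(l-k)p_k$, $[e,p_k]=kp_{k-1}$, $[f,p_k]=(2l-k)p_{k+1}$ (with $p_{-1}=p_{2l+1}=0$), $z$ central, and $[p_k,p_{k'}]=\delta_{k+k',2l}(-1)^{k+l+\frac12}k!(2l-k)!\,z$ for $k,k'=0,\dots,2l$. $\tilde{\mathcal H}^{(l)}=\mathrm{span}\{p_0,\dots,p_{2l},z\}$ is its Heisenberg subalgebra. $U(\cdot)$ denotes the universal enveloping algebra, and $U(\tilde{\mathcal H}^{(l)})_{(z)}$ is the localization of $U(\tilde{\mathcal H}^{(l)})$ at the multiplicative set $\{z^i: i\ge 0\}$ ($z$ is central, so this is an Ore localization). *)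

(* Defs.v *)
From HB Require Import structures.
From mathcomp Require Import all_boot all_order all_algebra.
Set Implicit Arguments. Unset Strict Implicit. Unset Printing Implicit Defensive.
Import GRing.Theory.
Local Open Scope ring_scope.

(* Throughout, l = m + 1/2 with m : nat, so 2l = 2m+1 =: (N m) and the
   Heisenberg generators are p_0, ..., p_(N m).  Signs:
   (-1)^(k+l+1/2) = (-1)^(k+m+1),  (-1)^(k+l-1/2) = (-1)^(k+m). *)
Definition N (m : nat) : nat := (2 * m).+1.

Section Defs.
Variable K : fieldType.

Definition comm {A : algType K} (x y : A) : A := x * y - y * x.

Definition alg_hom {A B : algType K} (f : A -> B) : Prop :=
  (forall (a : K) (x y : A), f (a *: x + y) = a *: f x + f y) /\
  f 1 = 1 /\ (forall x y : A, f (x * y) = f x * f y).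

Definition inv_of {A : algType K} (x w : A) : Prop := x * w = 1 /\ w * x = 1.

(* bracket constant: [p_k, p_k'] = heis_c m k k' * z *)
Definition heis_c (m k k' : nat) : K :=
  if k + k' == N m then (-1) ^+ (k + m).+1 * (k`! * (N m - k)`!)%:R else 0.

Definition heis_rel (m : nat) {A : algType K} (p : nat -> A) (z : A) : Prop :=
  (forall k, (k <= N m)%N -> comm z (p k) = 0) /\
  (forall k k', (k <= N m)%N -> (k' <= N m)%N ->
      comm (p k) (p k') = heis_c m k k' *: z).

Definition g_rel (m : nat) {A : algType K} (e h f : A) (p : nat -> A) (z : A)
  : Prop :=
  heis_rel m p z /\
  comm h e = e *+ 2 /\ comm h f = - (f *+ 2) /\ comm e f = h /\
  comm z e = 0 /\ comm z h = 0 /\ comm z f = 0 /\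
  (forall k, (k <= N m)%N ->
     comm h (p k) = ((N m)%:R - (2 * k)%:R) *: p k /\
     comm e (p k) = k%:R *: p k.-1 /\
     comm f (p k) = (N m - k)%:R *: p k.+1).

(* (U, e,h,f,p,z) is a universal enveloping algebra of g~^(l):
   the associative K-algebra generated by the basis subject to
   xy - yx = [x,y]  (universal property). *)
Definition is_Ug (m : nat) (U : algType K) (e h f : U) (p : nat -> U) (z : U)
  : Prop :=
  g_rel m e h f p z /\
  forall (A : algType K) (e' h' f' : A) (p' : nat -> A) (z' : A),
    g_rel m e' h' f' p' z' ->
    (exists phi : U -> A, alg_hom phi /\ phi e = e' /\ phi h = h' /\
        phi f = f' /\ phi z = z' /\ (forall k, (k <= N m)%N -> phi (p k) = p' k))
    /\
    (forall phi psi : U -> A, alg_hom phi -> alg_hom psi ->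
        phi e = psi e -> phi h = psi h -> phi f = psi f -> phi z = psi z ->
        (forall k, (k <= N m)%N -> phi (p k) = psi (p k)) ->
        forall x, phi x = psi x).

Definition is_UH (m : nat) (V : algType K) (p : nat -> V) (z : V) : Prop :=
  heis_rel m p z /\
  forall (A : algType K) (p' : nat -> A) (z' : A),
    heis_rel m p' z' ->
    (exists phi : V -> A, alg_hom phi /\ phi z = z' /\
        (forall k, (k <= N m)%N -> phi (p k) = p' k))
    /\
    (forall phi psi : V -> A, alg_hom phi -> alg_hom psi ->
        phi z = psi z -> (forall k, (k <= N m)%N -> phi (p k) = psi (p k)) ->
        forall x, phi x = psi x).

Definition is_loc (V L : algType K) (z : V) (j : V -> L) : Prop :=
  alg_hom j /\ (exists w, inv_of (j z) w) /\
  forall (A : algType K) (psi : V -> A), alg_hom psi ->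
    (exists w, inv_of (psi z) w) ->
    (exists phi : L -> A, alg_hom phi /\ forall x, phi (j x) = psi x) /\
    (forall phi phi' : L -> A, alg_hom phi -> alg_hom phi' ->
        (forall x, phi (j x) = psi x) -> (forall x, phi' (j x) = psi x) ->
        forall y, phi y = phi' y).

(* The elements E, F, H of the localization, given q k = image of p_k
   and winv = z^{-1}.  Note l - k = (2l - 2k)/2 and (l + 1/2) = m + 1. *)
Definition lmk (m k : nat) : K := ((N m)%:R - (2 * k)%:R) / 2%:R.

Definition elE (m : nat) {L : algType K} (q : nat -> L) (winv : L) : L :=
  winv * \sum_(1 <= k < (N m).+1)
    (((-1) ^+ (k + m).+1 * lmk m k / ((k.-1)`! * (N m - k)`!)%:R)
       *: (q k.-1 * q (N m - k)%N)).

Definition elF (m : nat) {L : algType K} (q : nat -> L) (winv : L) : L :=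
  winv * \sum_(1 <= k < (N m).+1)
    (((-1) ^+ (k + m) * lmk m k / ((k.-1)`! * (N m - k)`!)%:R)
       *: (q k * q (N m - k).+1)).

Definition elH (m : nat) {L : algType K} (q : nat -> L) (winv : L) : L :=
  (2%:R : K) *: (winv * \sum_(0 <= k < m.+1)
    (((-1) ^+ (k + m) * lmk m k / (k`! * (N m - k)`!)%:R)
       *: (q (N m - k)%N * q k)))
  - (((m.+1 ^ 2)%:R / 2%:R : K) *: 1).

End Defs.

(* Main.v *)
Require Import Defs.
From HB Require Import structures.
From mathcomp Require Import all_boot all_order all_algebra.
From mathcomp Require Import ring lra zify.
Import GRing.Theory.
Local Open Scope ring_scope.

Section CommLemmas.
Variable K : fieldType.
Variable A : algType K.
Implicit Types x y u v : A.

Lemma commE x y : comm x y = x * y - y * x. Proof. by []. Qed.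
Lemma comm_mulr x y u : comm x (y * u) = comm x y * u + y * comm x u.
Proof. rewrite !commE mulrBl mulrBr !mulrA; rewrite addrA; congr (_ + _).
by rewrite addrNK. Qed.
Lemma comm_mull x y u : comm (y * u) x = y * comm u x + comm y x * u.
Proof. rewrite !commE mulrBl mulrBr !mulrA. rewrite addrA addrNK. by []. Qed.
Lemma comm_addr x y u : comm x (y + u) = comm x y + comm x u.
Proof. by rewrite !commE mulrDl mulrDr opprD addrACA. Qed.
Lemma comm_addl x y u : comm (y + u) x = comm y x + comm u x.
Proof. by rewrite !commE mulrDl mulrDr opprD addrACA. Qed.
Lemma comm_scaler x (a : K) y : comm x (a *: y) = a *: comm x y.
Proof. by rewrite !commE -scalerAl -GRing.scalerAr scalerBr. Qed.
Lemma comm_scalel x (a : K) y : comm (a *: y) x = a *: comm y x.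
Proof. by rewrite !commE -scalerAl -GRing.scalerAr scalerBr. Qed.
Lemma comm_oppl x y : comm (- y) x = - comm y x.
Proof. by rewrite !commE mulNr mulrN opprB opprK addrC. Qed.
Lemma comm_subl x y u : comm (y - u) x = comm y x - comm u x.
Proof. by rewrite comm_addl comm_oppl. Qed.
Lemma comm_1l x : comm 1 x = 0. Proof. by rewrite commE mul1r mulr1 subrr. Qed.
Lemma comm_scale1l x (a : K) : comm (a *: 1) x = 0.
Proof. by rewrite comm_scalel comm_1l scaler0. Qed.
Lemma comm_anti x y : comm x y = - comm y x.
Proof. by rewrite !commE opprB. Qed.
Lemma comm_suml x (r1 r2 : nat) (F : nat -> A) :
  comm (\sum_(r1 <= k < r2) F k) x = \sum_(r1 <= k < r2) comm (F k) x.
Proof. by rewrite commE mulr_suml mulr_sumr -sumrB. Qed.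
Lemma comm_sumr x (r1 r2 : nat) (F : nat -> A) :
  comm x (\sum_(r1 <= k < r2) F k) = \sum_(r1 <= k < r2) comm x (F k).
Proof. by rewrite commE mulr_suml mulr_sumr -sumrB. Qed.
Lemma comm0 x y : comm x y = 0 -> x * y = y * x.
Proof. by move/eqP; rewrite commE subr_eq0 => /eqP. Qed.
End CommLemmas.
Section Heis.
Variable K : fieldType.
Variable m : nat.
Variable L : algType K.
Variables (q : nat -> L) (z w : L).
Hypothesis Hh : heis_rel m q z.
Hypothesis Hzw : z * w = 1.
Hypothesis Hwz : w * z = 1.

Local Notation NN := (N m).
Local Notation c := (heis_c K m).

Lemma zq a : (a <= NN)%N -> z * q a = q a * z.
Proof. by move=> ha; apply: comm0; apply: Hh.1. Qed.
Lemma zq' a : (a <= NN)%N -> comm z (q a) = 0.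
Proof. by move=> ha; apply: Hh.1. Qed.
Lemma wq a : (a <= NN)%N -> comm w (q a) = 0.
Proof.
move=> ha; apply/eqP; rewrite commE subr_eq0; apply/eqP.
rewrite -[w * q a]mulr1 -Hzw mulrA -(mulrA w) -zq // mulrA Hwz mul1r //.
Qed.
Lemma wq2 a : (a <= NN)%N -> w * q a = q a * w.
Proof. by move=> ha; apply: comm0; apply: wq. Qed.
Lemma qq a b : (a <= NN)%N -> (b <= NN)%N -> comm (q a) (q b) = c a b *: z.
Proof. by move=> ha hb; apply: Hh.2. Qed.
Lemma wz : comm w z = 0. Proof. by rewrite commE Hzw Hwz subrr. Qed.
Lemma zw : comm z w = 0. Proof. by rewrite commE Hzw Hwz subrr. Qed.

Lemma comm_y_quad (y : L) (phi : nat -> L) r1 r2 (s : nat -> K) (f g : nat -> nat) :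
  comm y w = 0 -> (forall a, (a <= NN)%N -> comm y (q a) = phi a) ->
  (forall k, (r1 <= k < r2)%N -> (f k <= NN)%N /\ (g k <= NN)%N) ->
  comm y (w * \sum_(r1 <= k < r2) s k *: (q (f k) * q (g k))) =
  w * \sum_(r1 <= k < r2) s k *: (phi (f k) * q (g k) + q (f k) * phi (g k)).
Proof.
move=> yw yq hfg; rewrite comm_mulr yw mul0r add0r; congr (_ * _).
rewrite comm_sumr; apply: eq_big_nat => k hk; have [hf hg] := hfg k hk.
by rewrite comm_scaler comm_mulr !yq.
Qed.

Lemma comm_y_quad0 (y : L) r1 r2 (s : nat -> K) (f g : nat -> nat) :
  comm y w = 0 -> (forall a, (a <= NN)%N -> comm y (q a) = 0) ->
  (forall k, (r1 <= k < r2)%N -> (f k <= NN)%N /\ (g k <= NN)%N) ->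
  comm y (w * \sum_(r1 <= k < r2) s k *: (q (f k) * q (g k))) = 0.
Proof.
move=> yw yq hfg; rewrite (@comm_y_quad _ (fun _ => 0)) //.
by rewrite big1 ?mulr0 // => k _; rewrite mul0r mulr0 addr0 scaler0.
Qed.

Lemma comm_quad_q r1 r2 (s : nat -> K) (f g : nat -> nat) i :
  (i <= NN)%N ->
  (forall k, (r1 <= k < r2)%N -> (f k <= NN)%N /\ (g k <= NN)%N) ->
  comm (w * \sum_(r1 <= k < r2) s k *: (q (f k) * q (g k))) (q i) =
  \sum_(r1 <= k < r2) (s k * c (g k) i) *: q (f k) +
  \sum_(r1 <= k < r2) (s k * c (f k) i) *: q (g k).
Proof.
move=> hi hfg; rewrite comm_anti (@comm_y_quad _ (fun a => - (c a i *: z))) //.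
- rewrite -big_split /= mulr_sumr -sumrN; apply: eq_big_nat => k hk.
  have [hf hg] := hfg k hk.
  rewrite mulNr mulrN -opprD scalerN mulrN opprK.
  rewrite scalerDr mulrDr -!scalerAl -!scalerAr -(zq _ hf) !scalerA.
  by rewrite !mulrA Hwz !mul1r addrC.
- by rewrite comm_anti wq // oppr0.
- by move=> a ha; rewrite comm_anti qq.
Qed.
End Heis.
Lemma sgn_eq2 (K : fieldType) (a b c : nat) : (a + b = c.*2)%N -> (-1) ^+ a = (-1) ^+ b :> K.
Proof.
move=> h; rewrite -signr_odd -[in RHS]signr_odd.
have : odd (a + b) = false by rewrite h odd_double.
by rewrite oddD; case: (odd a); case: (odd b).
Qed.
Lemma sgnS (K : fieldType) (a : nat) : (-1) ^+ a.+1 = - (-1) ^+ a :> K.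
Proof. by rewrite exprS mulN1r. Qed.
Lemma sgn_sq (K : fieldType) (a : nat) : (-1) ^+ a * (-1) ^+ a = 1 :> K.
Proof. by rewrite -signr_odd; case: (odd a); rewrite ?expr0 ?expr1 ?mulr1 ?mulrNN ?mulr1. Qed.

Section Scal.
Variable K : fieldType.
Hypothesis HK : [pchar K] =i pred0.
Lemma nz (n : nat) : (0 < n)%N -> n%:R != 0 :> K.
Proof. by case: n => // n _; rewrite ((pcharf0P K).1 HK). Qed.
Lemma nzf (n : nat) : n`!%:R != 0 :> K.
Proof. exact: nz (fact_gt0 n). Qed.

Lemma scalE m i j : (i.+1 + j = N m)%N ->
  ((-1) ^+ (i.+1 + m).+1 * lmk K m i.+1 / (i`! * j`!)%:R * heis_c K m j i.+1)
  + ((-1) ^+ (j.+1 + m).+1 * lmk K m j.+1 / (j`! * i`!)%:R * heis_c K m j i.+1)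
  = (i.+1)%:R.
Proof.
move=> h.
have e1 : (N m - i.+1 = j)%N by lia.
have e2 : (N m - j.+1 = i)%N by lia.
have e3 : (N m - j = i.+1)%N by lia.
have e4 : (j + i.+1 == N m) by apply/eqP; lia.
rewrite /heis_c e3 e4 /= /lmk -h.
rewrite !addSn !sgnS (@sgn_eq2 K (j + m) (i + m) (m + m)); last by move: h; rewrite /N; lia.
rewrite -signr_odd; case: (odd (i+m)); rewrite /= ?expr0 ?expr1;
rewrite !factS !natrM; field; rewrite ?nzf ?nz //.
Qed.
End Scal.

Ltac nzt HK := rewrite ?nat1r ?natr1; repeat (apply/andP; split);
  try (apply: (@nzf _ HK)); try (apply: (@nz _ HK); lia).


Section Scal2.
Variable K : fieldType.
Hypothesis HK : [pchar K] =i pred0.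

Lemma scalF m i j : (i.+1 + j = N m)%N ->
  (-1) ^+ (i.+1 + m) * lmk K m i.+1 / (i`! * j`!)%:R * heis_c K m j.+1 i +
  (-1) ^+ (j.+1 + m) * lmk K m j.+1 / (j`! * i`!)%:R * heis_c K m j.+1 i =
  (j.+1)%:R.
Proof.
move=> h.
have e3 : (N m - j.+1 = i)%N by lia.
have e4 : (j.+1 + i == N m) by apply/eqP; lia.
rewrite /heis_c e3 e4 /= /lmk -h.
rewrite !addSn !sgnS (@sgn_eq2 K (j + m) (i + m) (m + m)); last by move: h; rewrite /N; lia.
rewrite -signr_odd; case: (odd (i+m)); rewrite /= ?expr0 ?expr1;
rewrite !factS !natrM; field; rewrite ?nzf ?nz //.
Qed.

Lemma scalH1 m i j : (i + j = N m)%N ->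
  2 * ((-1) ^+ (i + m) * lmk K m i / (i`! * j`!)%:R * heis_c K m j i) =
  (N m)%:R - (2 * i)%:R.
Proof.
move=> h.
have e3 : (N m - j = i)%N by lia.
have e4 : (j + i == N m) by apply/eqP; lia.
rewrite /heis_c e3 e4 /= /lmk -h.
rewrite !sgnS (@sgn_eq2 K (j + m) (i + m).+1 (m + m).+1); last by move: h; rewrite /N; lia.
rewrite !sgnS.
rewrite -signr_odd; case: (odd (i+m)); rewrite /= ?expr0 ?expr1;
rewrite !natrM; field; rewrite ?nzf ?nz //.
Qed.

Lemma scalH2 m i j : (i + j = N m)%N ->
  2 * ((-1) ^+ (j + m) * lmk K m j / (j`! * i`!)%:R * heis_c K m j i) =
  (N m)%:R - (2 * i)%:R.
Proof.
move=> h.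
have e3 : (N m - j = i)%N by lia.
have e4 : (j + i == N m) by apply/eqP; lia.
rewrite /heis_c e3 e4 /= /lmk -h.
rewrite !sgnS.
rewrite -signr_odd; case: (odd (j+m)); rewrite /= ?expr0 ?expr1;
rewrite !natrM; field; rewrite ?nzf ?nz //.
Qed.
End Scal2.
Definition bF (K : fieldType) m k : K :=
  (-1) ^+ (k + m) * lmk K m k / ((k.-1)`! * (N m - k)`!)%:R.
Definition dd (K : fieldType) m k : K :=
  (if (k < N m)%N then bF K m k.+1 * (k.+1)%:R else 0) +
  (if (0 < k)%N then bF K m k * ((N m - k).+1)%:R else 0).

Section Scal3.
Variable K : fieldType.
Hypothesis HK : [pchar K] =i pred0.

Lemma dd_form m k j : (k + j = N m)%N ->
  dd K m k = (-1) ^+ (k + m) * (2%:R * (k.+1)%:R * j%:R - (j%:R - k%:R) ^+ 2)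
             / (2%:R * (k`! * j`!)%:R).
Proof.
move=> h; rewrite /dd /bF /lmk.
case: k h => [|k] h.
  case: j h => [|j] h; first by move: h; rewrite /N; lia.
  have -> : (0 < N m)%N by rewrite /N.
  have -> : (N m - 1 = j)%N by lia.
  rewrite /= addr0 -h !addSn sgnS !add0n.
  rewrite !factS !natrM; field; nzt HK.
case: j h => [|j] h.
  have -> : (k.+1 < N m)%N = false by lia.
  have -> : (N m - k.+1 = 0)%N by lia.
  rewrite /= add0r -h !addn0.
  rewrite !factS !natrM; field; nzt HK.
have -> : (k.+1 < N m)%N by lia.
have -> : (N m - k.+2 = j)%N by lia.
have -> : (N m - k.+1 = j.+1)%N by lia.
rewrite /= -h !addSn sgnS.
rewrite !factS !natrM; field; nzt HK.
Qed.
End Scal3.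
Section Scal4.
Variable K : fieldType.
Hypothesis HK : [pchar K] =i pred0.

Lemma dd_pair m k j : (k + j = N m)%N ->
  dd K m k + dd K m j = 2%:R * ((-1) ^+ (k + m) * lmk K m k / (k`! * j`!)%:R).
Proof.
move=> h; rewrite (@dd_form K HK m k j h) (@dd_form K HK m j k); last by lia.
rewrite (@sgn_eq2 K (j + m) (k + m).+1 (m + m).+1); last by move: h; rewrite /N; lia.
rewrite sgnS /lmk -h.
rewrite !natrM; field; nzt HK.
Qed.

Lemma poly_sum (Nr : K) n :
  \sum_(0 <= k < n) (2%:R * (k.+1)%:R * (Nr - k%:R) - (Nr - 2%:R * k%:R) ^+ 2) =
  - 2%:R * n%:R ^+ 3 + (3%:R * Nr + 2%:R) * n%:R ^+ 2 - (Nr ^+ 2 + Nr) * n%:R.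
Proof.
elim: n => [|n IH]; first by rewrite big_geq //; ring.
rewrite big_nat_recr //= IH; rewrite -!natr1; ring.
Qed.

Lemma dd_const m :
  \sum_(0 <= k < m.+1) dd K m k * heis_c K m k (N m - k) = - ((m.+1 ^ 2)%:R / 2%:R).
Proof.
have -> : \sum_(0 <= k < m.+1) dd K m k * heis_c K m k (N m - k) =
  \sum_(0 <= k < m.+1) (- (2%:R * (k.+1)%:R * ((N m)%:R - k%:R) -
        ((N m)%:R - 2%:R * k%:R) ^+ 2) / 2%:R).
  apply: eq_big_nat => k /andP[_ hk].
  have hkj : (k + (N m - k) = N m)%N by rewrite /N; lia.
  have e4 : (k + (N m - k) == N m)%N by apply/eqP.
  rewrite (@dd_form K HK m _ _ hkj) /heis_c e4 natrB; last by rewrite /N; lia.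
  rewrite sgnS.
  rewrite -signr_odd; case: (odd (k + m)); rewrite /= ?expr0 ?expr1;
  rewrite !natrM; field; nzt HK.
rewrite -big_distrl /= sumrN poly_sum /N.
rewrite natrX -!natr1 !natrM; field; nzt HK.
Qed.
End Scal4.
Lemma shift_sum (K : fieldType) (V : lmodType K) n (al be : nat -> K) (T : nat -> V) :
  \sum_(1 <= k < n.+1) (al k.-1 *: T k.-1 + be k *: T k) =
  \sum_(0 <= i < n.+1) ((if (i < n)%N then al i else 0) + (if (0 < i)%N then be i else 0)) *: T i.
Proof.
rewrite big_split /=.
rewrite [RHS](eq_big_nat _ _ (F2 := fun i => (if (i < n)%N then al i else 0) *: T i +
   (if (0 < i)%N then be i else 0) *: T i)); last by move=> i _; rewrite scalerDl.
rewrite big_split /=; congr (_ + _).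
  rewrite big_add1 /= big_nat_recr //= ltnn scale0r addr0.
  by apply: eq_big_nat => i /andP[_ hi]; rewrite hi.
by rewrite big_add1 /= big_nat_recl //= scale0r add0r.
Qed.

Lemma rev_sum (V : zmodType) mm (F : nat -> V) :
  \sum_(mm.+1 <= i < (N mm).+1) F i = \sum_(0 <= k < mm.+1) F (N mm - k)%N.
Proof.
rewrite big_nat_rev (big_addn 0 _ mm.+1).
have -> : ((N mm).+1 - mm.+1 = mm.+1)%N by rewrite /N; lia.
apply: eq_big_nat => k /andP[_ hk]; congr F; rewrite /N; lia.
Qed.
Lemma sum_delta (K : fieldType) (V : lmodType K) r1 r2 k0 (G : nat -> V) :
  (forall k, (r1 <= k < r2)%N -> k != k0 -> G k = 0) ->
  \sum_(r1 <= k < r2) G k = if (r1 <= k0 < r2)%N then G k0 else 0.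
Proof.
move=> h; rewrite -(big_nat1_eq +%R G k0 r1 r2) big_mkcond /=; apply: eq_big_nat => k hk.
by case: eqP => // /eqP ne; rewrite h.
Qed.

Lemma heis0 (K : fieldType) m a b : (a + b != N m)%N -> heis_c K m a b = 0.
Proof. by move=> h; rewrite /heis_c (negbTE h). Qed.

Section Main.
Variable K : fieldType.
Hypothesis HK : [pchar K] =i pred0.
Variable m : nat.
Variable L : algType K.
Variables (q : nat -> L) (z w : L).
Hypothesis Hh : heis_rel m q z.
Hypothesis Hzw : z * w = 1.
Hypothesis Hwz : w * z = 1.
Local Notation NN := (N m).

Lemma E_q i : (i <= NN)%N -> comm (elE m q w) (q i) = i%:R *: q i.-1.
Proof.
move=> hi; rewrite /elE (@comm_quad_q K m L q z w Hh Hzw Hwz) //; last first.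
  by move=> k /andP[h1 h2]; split; lia.
rewrite (@sum_delta _ _ _ _ i); last first.
  by move=> k /andP[h1 h2] ne; rewrite heis0 ?mulr0 ?scale0r //; lia.
rewrite (@sum_delta _ _ _ _ (NN.+1 - i)%N); last first.
  by move=> k /andP[h1 h2] ne; rewrite heis0 ?mulr0 ?scale0r //; lia.
case: i hi => [|i] hi.
  have -> : (1 <= NN.+1 - 0 < NN.+1)%N = false by lia.
  by rewrite /= scale0r addr0.
have -> : (1 <= i.+1 < NN.+1)%N by lia.
have -> : (1 <= NN.+1 - i.+1 < NN.+1)%N by lia.
set j := (NN - i.+1)%N.
have hj : (i.+1 + j = NN)%N by rewrite /j; lia.
have -> : (NN.+1 - i.+1 = j.+1)%N by rewrite /j; lia.
have -> : (NN - j.+1 = i)%N by lia.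
rewrite /= -scalerDl; congr (_ *: _).
exact: (@scalE K HK m i j hj).
Qed.
End Main.
Section Main2.
Variable K : fieldType.
Hypothesis HK : [pchar K] =i pred0.
Variable m : nat.
Variable L : algType K.
Variables (q : nat -> L) (z w : L).
Hypothesis Hh : heis_rel m q z.
Hypothesis Hzw : z * w = 1.
Hypothesis Hwz : w * z = 1.
Local Notation NN := (N m).

Lemma F_q i : (i <= NN)%N -> comm (elF m q w) (q i) = (NN - i)%:R *: q i.+1.
Proof.
move=> hi; rewrite /elF (@comm_quad_q K m L q z w Hh Hzw Hwz) //; last first.
  by move=> k /andP[h1 h2]; split; lia.
rewrite (@sum_delta _ _ _ _ i.+1); last first.
  by move=> k /andP[h1 h2] ne; rewrite heis0 ?mulr0 ?scale0r //; lia.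
rewrite (@sum_delta _ _ _ _ (NN - i)%N); last first.
  by move=> k /andP[h1 h2] ne; rewrite heis0 ?mulr0 ?scale0r //; lia.
have [->|hlt] := eqVneq i NN.
  have -> : (1 <= NN.+1 < NN.+1)%N = false by lia.
  have -> : (1 <= NN - NN < NN.+1)%N = false by lia.
  by rewrite subnn scale0r addr0.
have -> : (1 <= i.+1 < NN.+1)%N by lia.
have -> : (1 <= NN - i < NN.+1)%N by lia.
set j := (NN - i.+1)%N.
have hj : (i.+1 + j = NN)%N by rewrite /j; lia.
have -> : (NN - i = j.+1)%N by rewrite /j; lia.
have -> : (NN - j.+1 = i)%N by lia.
rewrite /= -scalerDl; congr (_ *: _).
exact: (@scalF K HK m i j hj).
Qed.

Lemma H_q i : (i <= NN)%N -> comm (elH m q w) (q i) = ((NN)%:R - (2 * i)%:R) *: q i.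
Proof.
move=> hi; rewrite /elH comm_subl comm_scale1l subr0 comm_scalel.
rewrite (@comm_quad_q K m L q z w Hh Hzw Hwz) //; last first.
  by move=> k /andP[h1 h2]; split; rewrite /N; lia.
rewrite (@sum_delta _ _ _ _ (NN - i)%N); last first.
  by move=> k /andP[h1 h2] ne; rewrite heis0 ?mulr0 ?scale0r //; move: h2 ne; rewrite /N; lia.
rewrite (@sum_delta _ _ _ _ i); last first.
  by move=> k /andP[h1 h2] ne; rewrite heis0 ?mulr0 ?scale0r //; move: h2 ne; rewrite /N; lia.
have [him|him] := leqP i m.
  have -> : (0 <= NN - i < m.+1)%N = false by rewrite /N; lia.
  have -> : (0 <= i < m.+1)%N by lia.
  set j := (NN - i)%N.
  have hj : (i + j = NN)%N by rewrite /j; lia.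
  rewrite add0r scalerA; congr (_ *: _).
  exact: (@scalH1 K HK m i j hj).
have -> : (0 <= NN - i < m.+1)%N by rewrite /N; lia.
have -> : (0 <= i < m.+1)%N = false by lia.
set j := (NN - i)%N.
have hj : (i + j = NN)%N by rewrite /j; lia.
have -> : (NN - j = i)%N by lia.
rewrite addr0 scalerA; congr (_ *: _).
exact: (@scalH2 K HK m i j hj).
Qed.
End Main2.
Section Main3.
Variable K : fieldType.
Hypothesis HK : [pchar K] =i pred0.
Variable m : nat.
Variable L : algType K.
Variables (q : nat -> L) (z w : L).
Hypothesis Hh : heis_rel m q z.
Hypothesis Hzw : z * w = 1.
Hypothesis Hwz : w * z = 1.
Local Notation NN := (N m).
Local Notation E := (elE m q w).
Local Notation F := (elF m q w).
Local Notation H := (elH m q w).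

Lemma commE_y y : comm y w = 0 -> (forall a, (a <= NN)%N -> comm y (q a) = 0) -> comm y E = 0.
Proof.
move=> yw yq; rewrite /elE (@comm_y_quad0 K m L q w) //.
by move=> k /andP[h1 h2]; split; lia.
Qed.
Lemma commF_y y : comm y w = 0 -> (forall a, (a <= NN)%N -> comm y (q a) = 0) -> comm y F = 0.
Proof.
move=> yw yq; rewrite /elF (@comm_y_quad0 K m L q w) //.
by move=> k /andP[h1 h2]; split; lia.
Qed.
Lemma commH_y y : comm y w = 0 -> (forall a, (a <= NN)%N -> comm y (q a) = 0) -> comm y H = 0.
Proof.
move=> yw yq; rewrite comm_anti /elH comm_subl comm_scale1l subr0 comm_scalel.
rewrite comm_anti (@comm_y_quad0 K m L q w) ?oppr0 ?scaler0 ?oppr0 //.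
by move=> k /andP[h1 h2]; split; rewrite /N; lia.
Qed.

Lemma ww : comm w w = 0. Proof. by rewrite commE subrr. Qed.
Lemma wq' a : (a <= NN)%N -> comm w (q a) = 0. Proof. exact: (@wq K m L q z w Hh Hzw Hwz). Qed.
Lemma zw' : comm z w = 0. Proof. exact: (@zw K L z w Hzw Hwz). Qed.
Lemma zq'' a : (a <= NN)%N -> comm z (q a) = 0. Proof. exact: (@zq' K m L q z Hh). Qed.

Lemma Hw : comm H w = 0.
Proof. by rewrite comm_anti commH_y ?oppr0 //; [exact: ww | exact: wq']. Qed.
Lemma Ew : comm E w = 0.
Proof. by rewrite comm_anti commE_y ?oppr0 //; [exact: ww | exact: wq']. Qed.

Lemma HE : comm H E = E *+ 2.
Proof.
rewrite {1}/elE (@comm_y_quad K m L q w H (fun a => ((N m)%:R - (2 * a)%:R) *: q a)).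
- rewrite /elE -mulrnAr -sumrMnl; congr (_ * _); apply: eq_big_nat => k /andP[h1 h2].
  rewrite -scalerAl -scalerAr -scalerDl scalerA -scaler_nat scalerA; congr (_ *: _).
  rewrite mulrC; congr (_ * _).
  case: k h1 h2 => [|k] // _ h2.
  have hj : (NN - k.+1 + k.+1 = NN)%N by lia.
  move: (NN - k.+1)%N hj => j hj; rewrite -hj.
  rewrite /= !natrM; ring.
- exact: Hw.
- by move=> a ha; rewrite (@H_q K HK m L q z w Hh Hzw Hwz).
- by move=> k /andP[h1 h2]; split; lia.
Qed.
Lemma HF : comm H F = - (F *+ 2).
Proof.
rewrite {1}/elF (@comm_y_quad K m L q w H (fun a => ((N m)%:R - (2 * a)%:R) *: q a)).
- rewrite /elF -mulrnAr -mulrN -sumrMnl -sumrN; congr (_ * _); apply: eq_big_nat => k /andP[h1 h2].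
  rewrite -scalerAl -scalerAr -scalerDl scalerA -scaler_nat scalerA -scaleNr; congr (_ *: _).
  have hj : (NN - k + k = NN)%N by lia.
  move: (NN - k)%N hj => j hj; rewrite -hj.
  rewrite /= ; ring.
- exact: Hw.
- by move=> a ha; rewrite (@H_q K HK m L q z w Hh Hzw Hwz).
- by move=> k /andP[h1 h2]; split; lia.
Qed.
Lemma EF : comm E F = H.
Proof.
rewrite {1}/elF (@comm_y_quad K m L q w E (fun a => a%:R *: q a.-1)); first last.
- by move=> k /andP[h1 h2]; split; lia.
- by move=> a ha; rewrite (@E_q K HK m L q z w Hh Hzw Hwz).
- exact: Ew.
pose T i := q i * q (NN - i)%N.
rewrite (eq_big_nat _ _ (F2 := fun k => (bF K m k.-1.+1 * (k.-1.+1)%:R) *: T k.-1 +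
    (bF K m k * ((NN - k).+1)%:R) *: T k)); last first.
  move=> k /andP[h1 h2]; case: k h1 h2 => [|k] // _ h2.
  rewrite /T /bF /=.
  have -> : (NN - k = (NN - k.+1).+1)%N by lia.
  rewrite scalerDr -scalerAl -scalerAr !scalerA; congr (_ *: _ + _ *: _).
rewrite (@shift_sum K L NN (fun i => bF K m i.+1 * (i.+1)%:R) (fun k => bF K m k * ((NN - k).+1)%:R) T).
rewrite (eq_big_nat _ _ (F2 := fun i => dd K m i *: T i)) //.
rewrite (@big_cat_nat _ _ _ m.+1) /=; [|by []|by rewrite /N; lia].
rewrite rev_sum -big_split /=.
rewrite (eq_big_nat _ _ (F2 := fun k => (dd K m k + dd K m (NN - k)) *: (q (NN - k) * q k) +
    (dd K m k * heis_c K m k (NN - k)) *: z)); last first.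
  move=> k /andP[_ hk].
  rewrite /T.
  have -> : (NN - (NN - k) = k)%N by rewrite /N; lia.
  have := (@qq K m L q z Hh k (NN - k)%N); rewrite commE => hc.
  have -> : q k * q (NN - k)%N = q (NN - k)%N * q k + heis_c K m k (NN - k) *: z.
    rewrite -hc; [by rewrite addrC subrK | | ]; rewrite /N; lia.
  by rewrite scalerDr scalerA [in RHS]scalerDl addrAC.
rewrite big_split /= -scaler_suml (@dd_const K HK m) mulrDr -scalerAr Hwz.
rewrite /elH scaleNr; congr (_ - _).
rewrite scalerAr scaler_sumr; congr (_ * _); apply: eq_big_nat => k /andP[_ hk].
rewrite scalerA; congr (_ *: _).
apply: (@dd_pair K HK m k (NN - k)%N); rewrite /N; lia.
Qed.
Lemma grel : g_rel m E H F q z.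
Proof.
split; first exact: Hh.
split; first exact: HE.
split; first exact: HF.
split; first exact: EF.
split; first by apply: commE_y; [exact: zw' | exact: zq''].
split; first by apply: commH_y; [exact: zw' | exact: zq''].
split; first by apply: commF_y; [exact: zw' | exact: zq''].
move=> k hk; split; last split.
- exact: (@H_q K HK m L q z w Hh Hzw Hwz).
- exact: (@E_q K HK m L q z w Hh Hzw Hwz).
- exact: (@F_q K HK m L q z w Hh Hzw Hwz).
Qed.
End Main3.

Section Hom.
Variable K : fieldType.
Variables (A B : algType K) (f : A -> B).
Hypothesis hf : alg_hom f.
Lemma hom0 : f 0 = 0.
Proof.
have := hf.1 1 0 0; rewrite !scale1r addr0 => h.
by move: (congr1 (fun t => t - f 0) h); rewrite subrr addrK => <-.
Qed.
Lemma homZ a x : f (a *: x) = a *: f x.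
Proof. by have := hf.1 a x 0; rewrite addr0 hom0 addr0. Qed.
Lemma homB x y : f (x - y) = f x - f y.
Proof. by have := hf.1 (-1) y x; rewrite addrC scaleN1r => ->; rewrite scaleN1r addrC. Qed.
Lemma homM x y : f (x * y) = f x * f y. Proof. exact: hf.2.2. Qed.
Lemma hom_comm x y : f (comm x y) = comm (f x) (f y).
Proof. by rewrite /comm homB !homM. Qed.
End Hom.

Lemma alg_hom_comp (K : fieldType) (A B C : algType K) (f : A -> B) (g : B -> C) :
  alg_hom f -> alg_hom g -> alg_hom (fun x => g (f x)).
Proof.
move=> [f1 [f2 f3]] [g1 [g2 g3]]; split; last split.
- by move=> a x y; rewrite f1 g1.
- by rewrite f2 g2.
- by move=> x y; rewrite f3 g3.
Qed.

Lemma heis_map (K : fieldType) m (A B : algType K) (f : A -> B) (p : nat -> A) (zz : A) :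
  alg_hom f -> heis_rel m p zz -> heis_rel m (fun k => f (p k)) (f zz).
Proof.
move=> hf [h1 h2]; split.
- by move=> k hk; rewrite -hom_comm // h1 // hom0.
- by move=> k k' hk hk'; rewrite -hom_comm // h2 // homZ.
Qed.

Theorem theorem1 (K : fieldType) (HK : [pchar K] =i pred0) (m : nat)
  (U : algType K) (eU hU fU : U) (pU : nat -> U) (zU : U)
  (V : algType K) (pV : nat -> V) (zV : V)
  (L : algType K) (j : V -> L) (iota : V -> U) (winv : L) :
  is_Ug m eU hU fU pU zU ->
  is_UH m pV zV ->
  is_loc zV j ->
  (* iota : U(H) -> U(g) is the algebra map induced by the inclusion H ⊂ g *)
  alg_hom iota -> iota zV = zU -> (forall k, (k <= N m)%N -> iota (pV k) = pU k) ->
  inv_of (j zV) winv ->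
  let q := fun k => j (pV k) in
  exists Phi : U -> L,
    (alg_hom Phi /\ (forall x, Phi (iota x) = j x) /\
     Phi eU = elE m q winv /\ Phi fU = elF m q winv /\ Phi hU = elH m q winv) /\
    (forall Psi : U -> L,
       alg_hom Psi -> (forall x, Psi (iota x) = j x) ->
       Psi eU = elE m q winv -> Psi fU = elF m q winv -> Psi hU = elH m q winv ->
       forall y, Psi y = Phi y).
Proof.
move=> [_ univU] [hHV univV] [hj _] hi hiz hip [hzw hwz] q.
have Hh : heis_rel m q (j zV) by exact: heis_map.
have G := @grel K HK m L q (j zV) winv Hh hzw hwz.
have [[Phi [hPhi [PE [PH [PF [Pz Pp]]]]]] uniqU] := univU L _ _ _ _ _ G.
have PhiI : forall x, Phi (iota x) = j x.
  have [_ uV] := univV L q (j zV) Hh.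
  apply: uV.
  - exact: alg_hom_comp.
  - exact: hj.
  - by rewrite /= hiz Pz.
  - by move=> k hk /=; rewrite (hip k hk) (Pp k hk).
exists Phi; split; first by split=> //; split=> //; split=> //; split.
move=> Psi hPsi PsiI PsE PsF PsH y.
apply: (uniqU Psi Phi hPsi hPhi); rewrite ?PE ?PH ?PF ?Pz //.
- by rewrite -hiz PsiI.
- by move=> k hk; rewrite -(hip k hk) PsiI PhiI.
Qed.
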